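(* Let $N=\{1,\dots,n\}$, let $\tilde Q\in\mathbb{R}^{n\times n}$ be symmetric positive definite, $\tilde d\in\mathbb{R}^n$, and $a,b\in\mathbb{R}^n$ with $b\le a$ componentwise. Let $A,B\subseteq N$ be disjoint, $I=N\setminus(A\cup B)$, and let $(x,s,t)$ be the KKT solution for $(A,B)$. Let $C=\{i: x_i<b_i \text{ or } s_i<0\}$, $D=\{i: x_i>a_i \text{ or } t_i>0\}$, and let $(y,u,v)$ be the KKT solution for $(C,D)$. Define $S=\{i\in A: s_i\ge0\}$, $T=\{i\in B: t_i\le 0\}$, $U=\{i\in I: x_i<b_i\}$, $V=\{i\in I: x_i>a_i\}$, $R=I\setminus(U\cup V)$, $K=\{i\in S\cup T\cup R: y_i<b_i\}$ and $L=\{i\in S\cup T\cup R: y_i>a_i\}$. With $g(w)=\max(b-w,0)$ and $h(w)=\max(w-a,0)$ (componentwise), we have $$\|g(y)\|^2-\|g(x)\|^2=\sum_{i\in K}|y_i-b_i|^2-\sum_{i\in U}|x_i-b_i|^2$$ and $$\|h(y)\|^2-\|h(x)\|^2=\sum_{i\in L}|y_i-a_i|^2-\sum_{i\in V}|x_i-a_i|^2.$$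
   Context: For disjoint $A_1,A_2\subseteq N$, the KKT solution for $(A_1,A_2)$ is the unique triple $(x,s,t)\in(\mathbb{R}^n)^3$ with $x_{A_1}=b_{A_1}$, $x_{A_2}=a_{A_2}$, $s_i=0$ for $i\notin A_1$, $t_i=0$ for $i\notin A_2$, and $\tilde Qx+\tilde d+s+t=0$. The sets $C$ and $D$ are disjoint. $\|\cdot\|$ is the Euclidean norm. *)

(* Defs.v *)
From HB Require Import structures.
From mathcomp Require Import all_boot all_order all_algebra.
Set Implicit Arguments. Unset Strict Implicit. Unset Printing Implicit Defensive.
Import Order.TTheory GRing.Theory Num.Theory.
Local Open Scope ring_scope.

(* Index set N = {1..n} is rendered as 'I_n; vectors as column vectors 'cV_n. *)

Definition sym_posdef (R : realFieldType) (n : nat) (Q : 'M[R]_n) : Prop :=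
  Q^T = Q /\ forall z : 'cV[R]_n, z != 0 -> 0 < (z^T *m Q *m z) 0 0.

Definition is_KKT_solution (R : realFieldType) (n : nat) (Q : 'M[R]_n)
    (d a b : 'cV[R]_n) (A1 A2 : {set 'I_n}) (x s t : 'cV[R]_n) : Prop :=
  [/\ forall i, i \in A1 -> x i 0 = b i 0,
      forall i, i \in A2 -> x i 0 = a i 0,
      forall i, i \notin A1 -> s i 0 = 0,
      forall i, i \notin A2 -> t i 0 = 0 &
      Q *m x + d + s + t = 0].

Definition enorm (R : rcfType) (n : nat) (v : 'cV[R]_n) : R :=
  Num.sqrt (\sum_(i < n) v i 0 ^+ 2).

Definition gfun (R : realFieldType) (n : nat) (b w : 'cV[R]_n) : 'cV[R]_n :=
  \col_i Num.max (b i 0 - w i 0) 0.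
Definition hfun (R : realFieldType) (n : nat) (a w : 'cV[R]_n) : 'cV[R]_n :=
  \col_i Num.max (w i 0 - a i 0) 0.

(* Main.v *)
Require Import Defs.
From HB Require Import structures.
From mathcomp Require Import all_boot all_order all_algebra.
From mathcomp Require Import lra.
Import Order.TTheory GRing.Theory Num.Theory.
Local Open Scope ring_scope.

Lemma enorm_sq (R : rcfType) (n : nat) (v : 'cV[R]_n) :
  enorm v ^+ 2 = \sum_i v i 0 ^+ 2.
Proof. by rewrite /enorm sqr_sqrtr // sumr_ge0 // => i _; rewrite sqr_ge0. Qed.

Lemma gsum (R : rcfType) (n : nat) (b w : 'cV[R]_n) (W : {set 'I_n}) :
  (forall i, (i \in W) = (w i 0 < b i 0)) ->
  enorm (gfun b w) ^+ 2 = \sum_(i in W) `|w i 0 - b i 0| ^+ 2.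
Proof.
move=> HW; rewrite enorm_sq [RHS]big_mkcond; apply: eq_bigr => i _.
rewrite mxE HW -subr_gt0.
case: (ger0P (b i 0 - w i 0)) => h.
- case: ifP => h'.
  + by rewrite -normrN opprB ger0_norm.
  + have -> : b i 0 - w i 0 = 0.
      by apply/eqP; rewrite eq_le h andbT leNgt h'.
    by rewrite expr0n.
- have h2 : (0 < b i 0 - w i 0) = false by apply/negbTE; rewrite -leNgt ltW.
  by rewrite h2 expr0n.
Qed.

Lemma hsum (R : rcfType) (n : nat) (a w : 'cV[R]_n) (W : {set 'I_n}) :
  (forall i, (i \in W) = (a i 0 < w i 0)) ->
  enorm (hfun a w) ^+ 2 = \sum_(i in W) `|w i 0 - a i 0| ^+ 2.
Proof.
move=> HW; rewrite enorm_sq [RHS]big_mkcond; apply: eq_bigr => i _.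
rewrite mxE HW -subr_gt0.
case: (ger0P (w i 0 - a i 0)) => h.
- case: ifP => h'.
  + by [].
  + have -> : w i 0 - a i 0 = 0.
      by apply/eqP; rewrite eq_le h andbT leNgt h'.
    by rewrite expr0n.
- have h2 : (0 < w i 0 - a i 0) = false by apply/negbTE; rewrite -leNgt ltW.
  by rewrite h2 expr0n.
Qed.

Theorem mainTheorem2 (R : rcfType) (n : nat) (Q : 'M[R]_n) (d a b : 'cV[R]_n)
  (A B : {set 'I_n}) (x s t y u v : 'cV[R]_n) :
  sym_posdef Q ->
  (forall i, b i 0 <= a i 0) ->
  [disjoint A & B] ->
  is_KKT_solution Q d a b A B x s t ->
  let C := [set i | (x i 0 < b i 0) || (s i 0 < 0)] in
  let D := [set i | (x i 0 > a i 0) || (t i 0 > 0)] in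
  is_KKT_solution Q d a b C D y u v ->
  let I := ~: (A :|: B) in
  let S := [set i in A | 0 <= s i 0] in
  let T := [set i in B | t i 0 <= 0] in
  let U := [set i in I | x i 0 < b i 0] in
  let V := [set i in I | x i 0 > a i 0] in
  let Rs := I :\: (U :|: V) in
  let K := [set i in S :|: T :|: Rs | y i 0 < b i 0] in
  let L := [set i in S :|: T :|: Rs | y i 0 > a i 0] in
  enorm (gfun b y) ^+ 2 - enorm (gfun b x) ^+ 2
    = \sum_(i in K) `|y i 0 - b i 0| ^+ 2 - \sum_(i in U) `|x i 0 - b i 0| ^+ 2
  /\
  enorm (hfun a y) ^+ 2 - enorm (hfun a x) ^+ 2
    = \sum_(i in L) `|y i 0 - a i 0| ^+ 2 - \sum_(i in V) `|x i 0 - a i 0| ^+ 2.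
Proof.
move=> _ hba _ [xA xB _ _ _] C D [yC yD _ _ _] I S T U V Rs K L.
have key : forall i, i \notin C -> i \notin D -> i \in S :|: T :|: Rs.
  move=> i; rewrite !inE !negb_or -!leNgt => /andP[h1 h2] /andP[h3 h4].
  case iA: (i \in A) => /=; first by rewrite h2.
  case iB: (i \in B) => /=; first by rewrite h4.
  by rewrite ltNge h1 ltNge h3.
have xnotb : forall i, (i \in U) = (x i 0 < b i 0).
  move=> i; rewrite !inE; case iA: (i \in A) => /=.
    by rewrite xA // ltxx.
  case iB: (i \in B) => //=; rewrite xB // ltNge hba //.
have xnota : forall i, (i \in V) = (a i 0 < x i 0).
  move=> i; rewrite !inE; case iA: (i \in A) => /=.
    by rewrite xA // ltNge hba.
  case iB: (i \in B) => //=; rewrite xB // ltxx //.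
have ynotb : forall i, (i \in K) = (y i 0 < b i 0).
  move=> i; rewrite [in LHS]inE; case h: (y i 0 < b i 0); rewrite ?andbF ?andbT //.
  apply: key; apply/negP => hc.
    by move: h; rewrite yC // ltxx.
  by move: h; rewrite yD // ltNge hba.
have ynota : forall i, (i \in L) = (a i 0 < y i 0).
  move=> i; rewrite [in LHS]inE; case h: (a i 0 < y i 0); rewrite ?andbF ?andbT //.
  apply: key; apply/negP => hc.
    by move: h; rewrite yC // ltNge hba.
  by move: h; rewrite yD // ltxx.
split.
- by rewrite (@gsum _ _ _ _ _ ynotb) (@gsum _ _ _ _ _ xnotb).
- by rewrite (@hsum _ _ _ _ _ ynota) (@hsum _ _ _ _ _ xnota).
Qed.
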